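(* Let $\mathcal{H}=\mathbb{C}^{d_1}\otimes\cdots\otimes\mathbb{C}^{d_N}$ with all $d_i\ge2$ and $G=SL(d_1,\mathbb{C})\times\cdots\times SL(d_N,\mathbb{C})$ acting by $g_1\otimes\cdots\otimes g_N$. Suppose $|\Psi\rangle\in\mathcal{H}$ is semistable and $(g_n)_n$ is a sequence in $G$ with $\|g_n|\Psi\rangle\|\to\infty$. Then for every sequence of real numbers $(\phi_n)_n$ such that the limit $\lim_{n\to\infty}\frac{g_n|\Psi\rangle}{\|g_n|\Psi\rangle\|}e^{i\phi_n}$ exists, this limit lies in the null-cone $\mathcal{N}$.
   Context: The null-cone $\mathcal{N}$ is the set of vectors $|\psi\rangle$ with $0\in\overline{G|\psi\rangle}$ (standard topology); a vector is semistable if it is not in $\mathcal{N}$. *)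

(* Defs.v *)
From HB Require Import structures.
From mathcomp Require Import all_boot all_order all_algebra.
From mathcomp Require Import all_classical all_reals all_analysis.
From mathcomp Require Import complex.
Set Implicit Arguments. Unset Strict Implicit. Unset Printing Implicit Defensive.
Import Order.TTheory GRing.Theory Num.Theory.
Local Open Scope ring_scope.

Section Defs.
Variable R : realType.
Local Notation C := R[i].
Variables (N : nat) (d : 'I_N -> nat).

(* multi-indices (i_1,...,i_N) with i_k < d_k : basis of C^{d_1} (x) ... (x) C^{d_N} *)
Definition idx := {dffun forall k : 'I_N, 'I_(d k)}.

(* vectors of H = C^{d_1} (x) ... (x) C^{d_N}, in coordinates *)
Definition vec := idx -> C.

Definition gtuple := forall k : 'I_N, 'M[C]_(d k).

Definition inG (g : gtuple) : Prop := forall k, \det (g k) = 1.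

(* action of g_1 (x) ... (x) g_N on a vector *)
Definition act (g : gtuple) (v : vec) : vec :=
  fun i => \sum_(j : idx) (\prod_(k < N) g k (i k) (j k)) * v j.

Definition vnorm (v : vec) : R := Num.sqrt (\sum_(i : idx) Normc.normc (v i) ^+ 2).

Definition vcvg (u : nat -> vec) (l : vec) : Prop :=
  forall e : R, 0 < e -> exists M : nat, forall n, (M <= n)%N ->
    vnorm (fun i => u n i - l i) < e.

Definition nullcone (v : vec) : Prop :=
  forall e : R, 0 < e -> exists g, inG g /\ vnorm (act g v) < e.

Definition semistable (v : vec) : Prop := ~ nullcone v.

Definition expi (phi : R) : C := Complex (cos phi) (sin phi).

End Defs.

(* Main.v *)
Require Import Defs.
From HB Require Import structures.
From mathcomp Require Import all_boot all_order all_algebra.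
From mathcomp Require Import all_classical all_reals all_analysis.
From mathcomp Require Import complex.
Import Order.TTheory GRing.Theory Num.Theory.
Import numFieldNormedType.Exports.
Local Open Scope ring_scope.
Set Implicit Arguments. Unset Strict Implicit. Unset Printing Implicit Defensive.

Lemma prod_sum_dffun (K : comNzRingType) (I : finType) (T_ : I -> finType)
  (F : forall i, T_ i -> K) :
  \prod_i \sum_(j : T_ i) F i j = \sum_(f : {dffun forall i, T_ i}) \prod_i F i (f i).
Proof.
pose P_ i : {ffun T_ i -> K} := [ffun j => F i j].
transitivity (\prod_i \sum_(j in tagged_with T_ i) untag 0 (P_ i) j).
  apply: eq_bigr => i _; rewrite -(big_tag P_ i).
  by apply: eq_bigr => j _; rewrite ffunE.
rewrite (bigA_distr_big_dep _ (fun i j => untag 0 (P_ i) j)).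
rewrite -(big_fprod _ _ P_).
rewrite (reindex (@fprod_of_dffun I T_)); last first.
  by apply: onW_bij; apply: fprod_of_dffun_bij.
apply: eq_bigr => f _; apply: eq_bigr => i _.
by rewrite /fprod_of_dffun fprodE ffunE.
Qed.
Section Act.
Variables (R : realType) (N : nat) (d : 'I_N -> nat).
Local Notation C := R[i].

Definition gmul (g h : gtuple R d) : gtuple R d := fun k => g k *m h k.

Lemma act_comp (g h : gtuple R d) (v : vec R d) :
  act g (act h v) = act (gmul g h) v.
Proof.
apply: funext => i; rewrite /act.
under eq_bigr do rewrite big_distrr /=.
rewrite exchange_big /=; apply: eq_bigr => l _.
under eq_bigr do rewrite mulrA.
rewrite -big_distrl /=; congr (_ * _).
rewrite /gmul.
under [RHS]eq_bigr do rewrite mxE.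
rewrite prod_sum_dffun; apply: eq_bigr => j _.
by rewrite -big_split.
Qed.

Lemma act_scale (g : gtuple R d) (c : C) (v : vec R d) :
  act g (fun i => c * v i) = fun i => c * act g v i.
Proof.
apply: funext => i; rewrite /act big_distrr /=; apply: eq_bigr => j _.
by rewrite mulrCA.
Qed.

Lemma act_sub (g : gtuple R d) (v w : vec R d) :
  act g (fun i => v i - w i) = fun i => act g v i - act g w i.
Proof.
apply: funext => i; rewrite /act -sumrB; apply: eq_bigr => j _.
by rewrite mulrBr.
Qed.

Lemma act_diag (a : forall k, 'rV[C]_(d k)) (v : vec R d) :
  act (fun k => diag_mx (a k)) v = fun i => (\prod_k a k 0 (i k)) * v i.
Proof.
apply: funext => i; rewrite /act (bigD1 i) //= [X in _ + X]big1 ?addr0.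
  by congr (_ * _); apply: eq_bigr => k _; rewrite mxE eqxx mulr1n.
move=> j hji; apply/eqP; rewrite mulf_eq0; apply/orP; left.
have [k hk] : exists k, i k != j k.
  apply/existsP; apply: contraR hji; rewrite negb_exists => /forallP h.
  apply/eqP/ffunP => k; have := h k; rewrite negbK => /eqP ->; done.
by rewrite (bigD1 k) //= mxE (negbTE hk) mulr0n mul0r.
Qed.

End Act.
Section NC.
Variable R : realType.
Local Notation C := R[i].
Local Notation nc := (@Normc.normc R).

Lemma nc_ge0 (z : C) : 0 <= nc z.
Proof. by case: z => a b /=; apply: sqrtr_ge0. Qed.

Lemma ncE (z : C) : (nc z)%:C%C = `|z|.
Proof. by case: z => a b; rewrite normc_def. Qed.

Lemma nc_conj (z : C) : (nc z ^+ 2)%:C%C = z * z^*%C.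
Proof. by rewrite rmorphXn /= ncE normCK. Qed.

Lemma nc_real (x : R) : nc x%:C%C = `|x|.
Proof. by rewrite /= expr0n /= addr0 sqrtr_sqr. Qed.

Lemma nc_expi (x : R) : nc (expi x) = 1.
Proof. by rewrite /expi /= cos2Dsin2 sqrtr1. Qed.

Lemma ncM (x y : C) : nc (x * y) = nc x * nc y.
Proof. exact: Normc.normcM. Qed.

Lemma ncD (x y : C) : nc (x + y) <= nc x + nc y.
Proof. exact: le_normcD. Qed.

Lemma ncB (x y : C) : nc (x - y) = nc (y - x).
Proof. by rewrite -opprB normcN. Qed.

Lemma nc_sum (I : finType) (F : I -> C) : nc (\sum_i F i) <= \sum_i nc (F i).
Proof.
elim/big_rec2: _ => [|i y z _ hz]; first by rewrite Normc.normc0.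
by apply: le_trans (ncD _ _) _; rewrite lerD2l.
Qed.

Lemma nc_prod (I : finType) (F : I -> C) : nc (\prod_i F i) = \prod_i nc (F i).
Proof.
elim/big_rec2: _ => [|i y z _ hz]; first by rewrite Normc.normc1.
by rewrite ncM hz.
Qed.

Lemma nc_Re (z : C) : `|complex.Re z| <= nc z.
Proof.
case: z => a b /=; rewrite -[`|a|]sqrtr_sqr; apply: ler_wsqrtr.
by rewrite lerDl sqr_ge0.
Qed.

Lemma nc_Im (z : C) : `|complex.Im z| <= nc z.
Proof.
case: z => a b /=; rewrite -[`|b|]sqrtr_sqr; apply: ler_wsqrtr.
by rewrite lerDr sqr_ge0.
Qed.

Lemma nc_ReIm (z : C) : nc z <= `|complex.Re z| + `|complex.Im z|.
Proof.
case: z => a b /=.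
have h : 0 <= `|a| + `|b| by rewrite addr_ge0.
rewrite -[X in _ <= X](ger0_norm h) -sqrtr_sqr; apply: ler_wsqrtr.
rewrite sqrrD -[a ^+ 2]real_normK ?num_real // -[b ^+ 2]real_normK ?num_real //.
rewrite -addrA lerD2l lerDr.
by rewrite mulrn_wge0 // mulr_ge0.
Qed.

Lemma nc_eq0 (z : C) : (nc z == 0) = (z == 0).
Proof.
apply/eqP/eqP => [/Normc.eq0_normc //|->]; exact: Normc.normc0.
Qed.

Lemma nc_gt0 (z : C) : z != 0 -> (0:R) < nc z.
Proof. by move=> hz; rewrite lt_neqAle nc_ge0 andbT eq_sym nc_eq0. Qed.

End NC.
From mathcomp Require Import lra ring.
Local Open Scope sesquilinear_scope.
Section Unitary.
Variable R : realType.
Local Notation C := R[i].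
Local Notation nc := (@Normc.normc R).

Lemma nc_conjC (z : C) : (nc z ^+ 2)%:C%C = z * Num.conj_op z.
Proof. exact: nc_conj. Qed.

Lemma unit_row (n : nat) (M : 'M[C]_n) a :
  M *m M ^t* = 1%:M -> \sum_b nc (M a b) ^+ 2 = 1.
Proof.
move=> /matrixP /(_ a a); rewrite !mxE eqxx /= => h.
apply: (@complexI R); rewrite rmorph_sum rmorph1 /=.
apply: etrans h; apply: eq_bigr => b _; rewrite nc_conjC !mxE; reflexivity.
Qed.

Lemma unit_entry (n : nat) (M : 'M[C]_n) a b :
  M *m M ^t* = 1%:M -> nc (M a b) <= 1.
Proof.
move=> /(@unit_row n M a) h.
have : nc (M a b) ^+ 2 <= 1.
  rewrite -h (bigD1 b) //= lerDl sumr_ge0 // => c _; exact: sqr_ge0.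
have := @nc_ge0 R (M a b); nra.
Qed.

Lemma unit_det (n : nat) (M : 'M[C]_n) :
  M *m M ^t* = 1%:M -> nc (\det M) = 1.
Proof.
move=> /(congr1 determinant); rewrite det_mulmx det1 det_map_mx det_tr.
rewrite -nc_conjC => h.
have h2 : nc (\det M) ^+ 2 = 1 by apply: (@complexI R); rewrite h.
have := @nc_ge0 R (\det M); nra.
Qed.

End Unitary.
Section SVD.
Variable R : realType.
Local Notation C := R[i].
Local Notation nc := (@Normc.normc R).

Lemma unit_sq (n : nat) (P : 'M[C]_n) : P *m P ^t* = 1%:M -> P ^t* *m P = 1%:M.
Proof. by move=> h; apply: mulmx1C. Qed.

Lemma svd n (M : 'M[C]_n) : \det M != 0 ->
  exists (P Q : 'M[C]_n) (al : 'rV[C]_n),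
   [/\ P *m P ^t* = 1%:M, Q *m Q ^t* = 1%:M, (forall t, al 0 t != 0)
     & P *m M = diag_mx al *m Q].
Proof.
move=> hM.
pose A := M *m M ^t*.
have hAA : A ^t* = A by rewrite /A trmx_mul map_mxM trmxCK.
have hAn : A \is normalmx by apply/normalmxP; rewrite hAA.
have /orthomx_spectralP hAe := hAn.
set P := spectralmx A in hAe.
set D := spectral_diag A in hAe.
have hPu : P \is unitarymx by apply: spectral_unitarymx.
have hP : P *m P ^t* = 1%:M by apply/unitarymxP.
have hP' := unit_sq hP.
rewrite invmx_unitary // in hAe.
pose B := P *m M.
have hBB : B *m B ^t* = diag_mx D.
  rewrite /B trmx_mul map_mxM !mulmxA -[P *m M *m M ^t*]mulmxA -/A hAe.
  by rewrite !mulmxA hP mul1mx -mulmxA hP mulmx1.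
pose s t := \sum_j nc (B t j) ^+ 2.
have hD t : D 0 t = (s t)%:C%C.
  have := congr1 (fun X : 'M[C]_n => X t t) hBB; rewrite !mxE eqxx mulr1n => <-.
  rewrite rmorph_sum; apply: eq_bigr => j _; rewrite !mxE; symmetry; exact: nc_conjC.
have hdetP : \det P != 0.
  by rewrite -nc_eq0 (unit_det hP) oner_neq0.
have hdetB : \det B != 0 by rewrite /B det_mulmx mulf_neq0.
have hs t : s t != 0.
  apply/negP => /eqP hst.
  have := congr1 determinant hBB.
  rewrite det_mulmx det_map_mx det_tr det_diag (bigD1 t) //= hD hst mul0r.
  rewrite -nc_conjC => /(@complexI R) /eqP; rewrite sqrf_eq0 nc_eq0.
  by rewrite (negbTE hdetB).
have hs0 t : 0 < s t.
  rewrite lt_neqAle eq_sym hs /= sumr_ge0 // => j _; exact: sqr_ge0.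
pose al := \row_t ((Num.sqrt (s t))%:C%C : C).
have hal t : al 0 t != 0.
  rewrite mxE; apply/negP => /eqP h.
  have : Num.sqrt (s t) = 0 by apply: (@complexI R).
  by move/eqP; rewrite gt_eqF // sqrtr_gt0 hs0.
have halc t : al 0 t * Num.conj_op (al 0 t) = (s t)%:C%C.
  rewrite -nc_conjC; congr (_ %:C%C); rewrite mxE nc_real ger0_norm ?sqrtr_ge0 //.
  by rewrite sqr_sqrtr // ltW.
clearbody al.
pose be := \row_t (al 0 t)^-1.
pose Q := diag_mx be *m B.
exists P, Q, al; split => //.
  rewrite /Q trmx_mul map_mxM tr_diag_mx map_diag_mx.
  rewrite mulmxA -[diag_mx be *m B *m B ^t*]mulmxA hBB !mulmx_diag.
  apply/matrixP => a b; rewrite !mxE.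
  case: eqP => [->|_]; last by rewrite !mulr0n.
  rewrite !mulr1n hD -halc /be fmorphV mulrA mulVf ?hal // mul1r mulfV //.
  by rewrite conjC_eq0 hal.
rewrite /Q mulmxA mulmx_diag.
suff -> : (\row_j (al 0 j * be 0 j)) = const_mx 1 by rewrite diag_const_mx mul1mx.
apply/matrixP => a b; rewrite !mxE mulfV //; exact: hal.
Qed.

End SVD.
Section BW.
Variable R : realType.

Lemma cvgn_eps (u : nat -> R) : cvgn u ->
  exists l, forall e : R, 0 < e -> exists N, forall n, (N <= n)%N -> `|u n - l| < e.
Proof.
move=> /cvg_ex [l /= hl]; exists l => e he.
move/cvgrPdist_lt: hl => /(_ e he) [N _ hN].
by exists N => n hn; rewrite distrC; exact: hN.
Qed.

Lemma incr_ge (f : nat -> nat) : (forall n, f n < f n.+1)%N -> forall n, (n <= f n)%N.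
Proof.
move=> hf; elim=> [|n IH] //; apply: leq_ltn_trans IH (hf n).
Qed.

Lemma incr_mono (f : nat -> nat) : (forall n, f n < f n.+1)%N ->
  forall m n, (m <= n)%N -> (f m <= f n)%N.
Proof.
move=> hf m n; rewrite leq_eqVlt => /orP [/eqP -> //|hmn].
apply: ltnW; exact: (homo_ltn (@ltn_trans) hf hmn).
Qed.

Lemma subseq_all (T : finType) (x : T -> nat -> R) (hb : forall t n, `|x t n| <= 1) :
  forall s : seq T, exists f : nat -> nat, (forall n, f n < f n.+1)%N /\
    exists p : T -> R, forall t, t \in s -> forall e : R, 0 < e ->
      exists N, forall n, (N <= n)%N -> `|x t (f n) - p t| < e.
Proof.
elim=> [|t0 s [f [hf [p hp]]]].
  by exists id; split => // ; exists (fun=> 0).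
have hbd : bounded_fun (fun n => x t0 (f n)).
  rewrite /bounded_near; near=> M => n _ /=.
  apply: le_trans (hb _ _) _; near: M; apply: nbhs_pinfty_ge; exact: num_real.
have [g hg hcv] := bolzano_weierstrass hbd.
have hg' : forall n, (g n < g n.+1)%N.
  by move=> n; have := (increasing_seqP g).2 hg n; rewrite ltEnat.
have [l hl] := cvgn_eps hcv.
exists (f \o g); split.
  move=> n /=; apply: (homo_ltn (@ltn_trans) hf); exact: hg'.
exists (fun t => if t == t0 then l else p t) => t; rewrite inE.
case: (eqVneq t t0) => [-> _|htt /= hts] e he.
  by have [N hN] := hl e he; exists N => n hn; exact: hN.
have [N hN] := hp t hts e he; exists N => n hn /=; apply: hN.
exact: leq_trans hn (incr_ge hg' n).
Unshelve. all: by end_near.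
Qed.

Lemma multi_cluster (T : finType) (x : T -> nat -> R) (hb : forall t n, `|x t n| <= 1) :
  exists p : T -> R, (forall t, `|p t| <= 1) /\
    forall e : R, 0 < e -> forall M, exists n, (M <= n)%N /\
      forall t, `|x t n - p t| < e.
Proof.
have [f [hf [p hp]]] := subseq_all hb (enum T).
have hp' : forall e : R, 0 < e -> exists N, forall n, (N <= n)%N -> forall t, `|x t (f n) - p t| < e.
  move=> e he.
  have [Nf hNf] : exists Nf : T -> nat, forall t n, (Nf t <= n)%N -> `|x t (f n) - p t| < e.
    apply: (@fin_all_exists T (fun=> nat) (fun t N => forall n, (N <= n)%N -> `|x t (f n) - p t| < e)).
    by move=> t; apply: hp => //; rewrite mem_enum.
  exists (\max_t Nf t) => n hn t; apply: hNf.
  by apply: leq_trans hn; apply: leq_bigmax.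
exists p; split.
  move=> t; rewrite leNgt; apply/negP => ht.
  have [N hN] := hp' (`|p t| - 1) ltac:(by rewrite subr_gt0).
  have := hN N (leqnn _) t; have := hb t (f N).
  move: (x t (f N)) => y hy.
  have := lerB_dist (p t) y; rewrite [`|p t - y|]distrC.
  lra.
move=> e he M; have [N hN] := hp' e he.
exists (f (maxn M N)); split.
  by apply: leq_trans (incr_ge hf _); apply: leq_maxl.
by apply: hN; apply: leq_maxr.
Qed.

End BW.
Section Bounds.
Variable R : realType.
Local Notation C := R[i].
Local Notation nc := (@Normc.normc R).

Lemma fin_lb (T : finType) (f : T -> R) : (forall t, 0 < f t) ->
  exists m, 0 < m /\ forall t, m <= f t.
Proof.
move=> hf.
suff : forall s : seq T, exists m, 0 < m /\ forall t, t \in s -> m <= f t.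
  by move=> /(_ (enum T)) [m [hm h]]; exists m; split => // t; apply: h; rewrite mem_enum.
elim=> [|a s [m [hm h]]]; first by exists 1.
exists (Num.min m (f a)); split; first by rewrite lt_min hm hf.
move=> t; rewrite inE => /orP [/eqP ->|hts]; first by rewrite ge_min lexx orbT.
by rewrite ge_min h.
Qed.

Lemma prod_le2 n (y : 'I_n -> C) : (forall k, nc (y k) <= 2) ->
  nc (\prod_k y k) <= 2 ^+ n.
Proof.
move=> hy; rewrite nc_prod.
have -> : (2 : R) ^+ n = \prod_(k < n) (2 : R) by rewrite prodr_const card_ord.
by apply: ler_prod => k _; rewrite nc_ge0 hy.
Qed.

Lemma prod_diff n (x y : 'I_n -> C) : (forall k, nc (x k) <= 2) ->
  (forall k, nc (y k) <= 2) ->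
  nc (\prod_k x k - \prod_k y k) <= 2 ^+ n * \sum_k nc (x k - y k).
Proof.
elim: n x y => [|n IH] x y hx hy.
  by rewrite !big_ord0 subrr Normc.normc0 mulr0.
rewrite !big_ord_recr /=.
set X := \prod_(i < n) x (widen_ord (leqnSn n) i).
set Y := \prod_(i < n) y (widen_ord (leqnSn n) i).
have hXY := IH (fun i => x (widen_ord (leqnSn n) i)) (fun i => y (widen_ord (leqnSn n) i))
  (fun k => hx _) (fun k => hy _).
have hY : nc Y <= 2 ^+ n by apply: prod_le2 => k; exact: hy.
have -> : X * x ord_max - Y * y ord_max = (X - Y) * x ord_max + Y * (x ord_max - y ord_max).
  by rewrite mulrBl mulrBr addrA subrK.
apply: le_trans (ncD _ _) _; rewrite !ncM.
set S := \sum_(i < n) _ in hXY.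
have h1 := hx ord_max.
have h2 := @nc_ge0 R (x ord_max - y ord_max).
have h3 := @nc_ge0 R (X - Y).
have h4 := @nc_ge0 R Y.
have hS : 0 <= S by apply: sumr_ge0 => k _; exact: nc_ge0.
have h2n : 0 <= (2 : R) ^+ n by apply: exprn_ge0.
rewrite exprS.
have -> : 2 * 2 ^+ n * (S + nc (x ord_max - y ord_max)) =
  (2 ^+ n * S) * 2 + 2 ^+ n * nc (x ord_max - y ord_max) * 2 by ring.
apply: lerD.
  by apply: ler_pM => //; exact: nc_ge0.
rewrite -[X in X <= _]mulr1; apply: ler_pM => //.
- by apply: mulr_ge0.
- by apply: ler_pM.
- lra.
Qed.

End Bounds.
Section VB.
Variables (R : realType) (N : nat) (d : 'I_N -> nat).
Local Notation C := R[i].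
Local Notation nc := (@Normc.normc R).

Lemma vnorm_ge0 (v : vec R d) : 0 <= vnorm v.
Proof. exact: sqrtr_ge0. Qed.

Lemma nc_le_vnorm (v : vec R d) i : nc (v i) <= vnorm v.
Proof.
rewrite -[nc (v i)]ger0_norm ?nc_ge0 // -sqrtr_sqr; apply: ler_wsqrtr.
rewrite (bigD1 i) //= lerDl; apply: sumr_ge0 => j _; exact: sqr_ge0.
Qed.

Lemma vnorm_le_sum (v : vec R d) : vnorm v <= \sum_i nc (v i).
Proof.
set S := \sum_i nc (v i).
have hS : 0 <= S by apply: sumr_ge0 => i _; exact: nc_ge0.
rewrite -[X in _ <= X]ger0_norm // -sqrtr_sqr; apply: ler_wsqrtr.
rewrite expr2 {2}/S big_distrr /=; apply: ler_sum => i _.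
rewrite expr2 ler_wpM2r ?nc_ge0 //.
rewrite /S (bigD1 i) //= lerDl; apply: sumr_ge0 => j _; exact: nc_ge0.
Qed.

Lemma act_bound (K : gtuple R d) (v : vec R d) i :
  (forall k a b, nc (K k a b) <= 1) -> nc (act K v i) <= \sum_j nc (v j).
Proof.
move=> hK; rewrite /act; apply: le_trans (nc_sum _) _; apply: ler_sum => j _.
rewrite ncM -[X in _ <= X]mul1r ler_wpM2r ?nc_ge0 // nc_prod.
by apply: prodr_ile1 => k _; rewrite nc_ge0 hK.
Qed.

Lemma act_diff (K K' : gtuple R d) (v : vec R d) i (del : R) :
  (forall k a b, nc (K k a b) <= 2) -> (forall k a b, nc (K' k a b) <= 2) ->
  (forall k a b, nc (K k a b - K' k a b) <= del) ->
  nc (act K v i - act K' v i) <= 2 ^+ N * (N%:R * del) * \sum_j nc (v j).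
Proof.
move=> hK hK' hD; rewrite /act -sumrB.
apply: le_trans (nc_sum _) _; rewrite big_distrr /=; apply: ler_sum => j _.
rewrite -mulrBl ncM ler_wpM2r ?nc_ge0 //.
apply: le_trans (@prod_diff R N (fun k => K k (i k) (j k)) (fun k => K' k (i k) (j k)) _ _) _.
- by move=> k; apply: hK.
- by move=> k; apply: hK'.
apply: ler_wpM2l; first exact: exprn_ge0.
have -> : N%:R * del = \sum_(k < N) del by rewrite sumr_const card_ord mulr_natl.
by apply: ler_sum => k _; apply: hD.
Qed.

End VB.
Section Aux.
Variable R : realType.
Local Notation C := R[i].
Local Notation nc := (@Normc.normc R).

Lemma svd3 n (M : 'M[C]_n) : \det M != 0 ->
  exists X : 'M[C]_n * 'M[C]_n * 'rV[C]_n,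
   [/\ X.1.1 *m X.1.1 ^t* = 1%:M, X.1.2 *m X.1.2 ^t* = 1%:M, (forall t, X.2 0 t != 0)
     & X.1.1 *m M = diag_mx X.2 *m X.1.2].
Proof.
move=> /svd [P [Q [al [h1 h2 h3 h4]]]]; by exists (P, Q, al).
Qed.

Lemma small (A eps : R) : 0 <= A -> 0 < eps -> exists del, 0 < del /\ A * del <= eps.
Proof.
move=> hA he; exists (eps / (A + 1)); split.
  by apply: divr_gt0 => //; lra.
rewrite mulrA ler_pdivrMr; last by lra.
have : 0 <= A * eps by apply: mulr_ge0 => //; exact: ltW.
rewrite mulrDr mulr1 mulrC; lra.
Qed.

Lemma nc_sub_ReIm (z w : C) : nc (z - w) <= `|complex.Re z - complex.Re w| + `|complex.Im z - complex.Im w|.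
Proof. by case: z => a b; case: w => c e /=; apply: (nc_ReIm ((a - c) +i* (b - e))%C). Qed.

End Aux.

Local Open Scope sesquilinear_scope.
Local Notation nc := (@Normc.normc _).
Unset Implicit Arguments.

Theorem lemma5 (R : realType) (N : nat) (d : 'I_N -> nat)
  (hd : forall k, (2 <= d k)%N)
  (Psi : vec R d) (hPsi : semistable Psi)
  (g : nat -> gtuple R d) (hg : forall n, inG (g n))
  (hdiv : forall M : R, exists n0 : nat, forall n, (n0 <= n)%N ->
            M < vnorm (act (g n) Psi))
  (phi : nat -> R) (L : vec R d)
  (hL : vcvg (fun n => fun i =>
          real_complex R (vnorm (act (g n) Psi))^-1 * act (g n) Psi i * expi (phi n)) L) :
  nullcone L.
Proof.
pose r n := vnorm (act (g n) Psi).
have hdetg : forall n k, \det (g n k) != 0 by move=> n k; rewrite hg oner_neq0.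
pose S n k := projT1 (cid (svd3 (hdetg n k))).
have hS n k := projT2 (cid (svd3 (hdetg n k))).
pose P n : gtuple R d := fun k => (S n k).1.1.
pose Q n : gtuple R d := fun k => (S n k).1.2.
pose al n k := (S n k).2.
have hP n k : P n k *m (P n k) ^t* = 1%:M by case: (hS n k).
have hQ n k : Q n k *m (Q n k) ^t* = 1%:M by case: (hS n k).
have hal n k t : al n k 0 t != 0 by case: (hS n k).
have hPg n k : P n k *m g n k = diag_mx (al n k) *m Q n k by case: (hS n k).
clearbody P Q al; clear hS S.
have hPb n k a b : nc (P n k a b) <= 1 by apply: unit_entry.
have hQb n k a b : nc (Q n k a b) <= 1 by apply: unit_entry.
pose Tt := {k : 'I_N & ('I_(d k) * 'I_(d k) * bool)%type}.
pose x (t : Tt) n := let k := tag t in let abc := tagged t in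
  if abc.2 then complex.Re (P n k abc.1.1 abc.1.2) else complex.Im (P n k abc.1.1 abc.1.2).
have hxb t n : `|x t n| <= 1.
  rewrite /x; case: (tagged t).2.
    by apply: le_trans (nc_Re _) _; apply: hPb.
  by apply: le_trans (nc_Im _) _; apply: hPb.
have [p [hp1 hp2]] := multi_cluster hxb.
pose K : gtuple R d := fun k => \matrix_(a, b)
  ((p (existT (fun k => ('I_(d k) * 'I_(d k) * bool)%type) k (a, b, true)))
   +i* (p (existT (fun k => ('I_(d k) * 'I_(d k) * bool)%type) k (a, b, false))))%C.
have hKb k a b : nc (K k a b) <= 2.
  rewrite /K mxE; apply: le_trans (nc_ReIm _) _ => /=.
  by have := hp1 (existT _ k (a, b, true)); have := hp1 (existT _ k (a, b, false)); lra.
have hclose : forall del : R, 0 < del -> forall M, exists n, (M <= n)%N /\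
    forall k a b, nc (K k a b - P n k a b) <= 2 * del.
  move=> del hdel M; have [n [hn hx]] := hp2 del hdel M; exists n; split => // k a b.
  rewrite ncB; apply: le_trans (nc_sub_ReIm _ _) _.
  rewrite /K mxE /=.
  have := hx (existT _ k (a, b, true)); have := hx (existT _ k (a, b, false)).
  rewrite /x /=; lra.
clearbody K.
have hPb2 n k a b : nc (P n k a b) <= 2 by apply: le_trans (hPb n k a b) _; lra.
pose D : R := (#|{: idx d}|)%:R.
have hD0 : 0 <= D by apply: ler0n.
pose SL := \sum_j nc (L j).
have hSL : 0 <= SL by apply: sumr_ge0 => j _; exact: nc_ge0.
pose B := \sum_j nc (Psi j).
have hB : 0 <= B by apply: sumr_ge0 => j _; exact: nc_ge0.
pose u := act K L.
have hpos : forall i, 0 < (if u i == 0 then 1 else nc (u i) / 2).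
  by move=> i; case: eqP => [_|/eqP hu]; [exact: ltr01 | apply: divr_gt0 => //; exact: nc_gt0].
have [tau [htau htauu]] := fin_lb hpos.
move=> e he.
pose A := 2 ^+ N * N%:R * SL.
have hA : 0 <= A by rewrite /A !mulr_ge0 // exprn_ge0.
have [del1 [hdel1 hAd1]] := @small R (A * 2) (tau / 2) ltac:(by rewrite mulr_ge0) ltac:(by rewrite divr_gt0).
have [eps1 [heps1 hDe]] := @small R D (tau / 2) hD0 ltac:(by rewrite divr_gt0).
have [M0 hM0] := hL eps1 heps1.
have [n0 hn0] := hdiv (8 * B * D / e).
have [n [hn hKn]] := hclose del1 hdel1 (maxn M0 n0).
have hr : 8 * B * D / e < r n by apply: hn0; apply: leq_trans hn; apply: leq_maxr.
have hv := hM0 n (leq_trans (leq_maxl _ _) hn).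
have hr0 : 0 < r n by apply: le_lt_trans hr; rewrite divr_ge0 ?mulr_ge0 // ltW.
pose c := ((r n)^-1)%:C%C * expi (phi n).
pose chi (i : idx d) := \prod_k al n k 0 (i k).
pose w := act (Q n) Psi.
have hchi i : chi i != 0 by apply/prodf_neq0 => k _; apply: hal.
have hwb i : nc (w i) <= B by apply: act_bound => k a b; apply: hQb.
have hnc : nc c = (r n)^-1.
  by rewrite /c ncM nc_expi mulr1 nc_real ger0_norm // invr_ge0 ltW.
pose vn := fun i => ((vnorm (act (g n) Psi))^-1)%:C%C * act (g n) Psi i * expi (phi n).
have hyn i : act (P n) vn i = c * (chi i * w i).
  have -> : vn = (fun i => c * act (g n) Psi i).
    by apply: funext => j; rewrite /vn /c mulrAC.
  rewrite act_scale act_comp.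
  have -> : gmul (P n) (g n) = gmul (fun k => diag_mx (al n k)) (Q n).
    by apply: functional_extensionality_dep => k; rewrite /gmul hPg.
  by rewrite -act_comp act_diag.
have hvn : vnorm (fun i => vn i - L i) < eps1 by exact: hv.
have hdiff i : nc (u i - act (P n) vn i) <= tau.
  have e1 : u i - act (P n) vn i = (act K L i - act (P n) L i) + (act (P n) L i - act (P n) vn i).
    by rewrite addrA subrK.
  rewrite e1; apply: le_trans (ncD _ _) _.
  have b1 : nc (act K L i - act (P n) L i) <= tau / 2.
    apply: le_trans (act_diff L i hKb (hPb2 n) hKn) _.
    apply: le_trans hAd1; rewrite /A /SL le_eqVlt; apply/orP; left; apply/eqP; ring.
  have b2 : nc (act (P n) L i - act (P n) vn i) <= tau / 2.
    have -> : act (P n) L i - act (P n) vn i = act (P n) (fun j => L j - vn j) i by rewrite act_sub.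
    apply: le_trans (act_bound _ _ (hPb n)) _.
    apply: le_trans (_ : _ <= \sum_(j : idx d) vnorm (fun i => vn i - L i)) _.
      by apply: ler_sum => j _; rewrite ncB; apply: (nc_le_vnorm (fun i => vn i - L i) j).
    rewrite sumr_const -[_ *+ _]mulr_natl; apply: le_trans _ hDe; apply: ler_wpM2l => //; exact: ltW.
  by apply: le_trans (lerD b1 b2) _; lra.
have key i : u i != 0 -> nc (u i) <= 2 * B / r n * nc (chi i).
  move=> hu; have h2 := htauu i; rewrite (negbTE hu) in h2.
  have h3 := ncD (u i - act (P n) vn i) (act (P n) vn i); rewrite subrK in h3.
  rewrite hyn ncM hnc ncM in h3.
  have h4 : nc (chi i) * nc (w i) <= nc (chi i) * B by rewrite ler_wpM2l ?nc_ge0 ?hwb.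
  have h5 : (r n)^-1 * (nc (chi i) * nc (w i)) <= (r n)^-1 * (nc (chi i) * B).
    by apply: ler_wpM2l => //; rewrite invr_ge0 ltW.
  have hdi := hdiff i; rewrite hyn in hdi.
  have -> : 2 * B / r n * nc (chi i) = 2 * ((r n)^-1 * (nc (chi i) * B)) by ring.
  move: h2 h3 h5 hdi.
  set Y := (r n)^-1 * (nc (chi i) * nc (w i)).
  set Z := (r n)^-1 * (nc (chi i) * B).
  lra.
have [mu [hmu hmuchi]] := fin_lb (fun i => nc_gt0 (hchi i)).
pose t0 k : 'I_(d k) := Ordinal (ltnW (hd k)).
have hDp : 0 < D.
  rewrite ltr0n; apply/card_gt0P; exists (finfun t0 : {dffun forall k, 'I_(d k)}); done.
pose eta := e / (4 * D).
have heta : 0 < eta by rewrite divr_gt0 // mulr_gt0.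
have [del2 [hdel2 hAd2]] := @small R (A * 2) (eta * mu) ltac:(by rewrite mulr_ge0) ltac:(by rewrite mulr_gt0).
have [m [_ hKm]] := hclose del2 hdel2 0.
pose y := act (P m) L.
have hym i : nc (y i - u i) <= eta * mu.
  rewrite ncB; apply: le_trans (act_diff L i hKb (hPb2 m) hKm) _.
  apply: le_trans hAd2; rewrite /A /SL le_eqVlt; apply/orP; left; apply/eqP; ring.
have hdetP k : \det (P m k) != 0 by rewrite -nc_eq0 (unit_det (hP m k)) oner_neq0.
have hprodal k : nc (\prod_t al n k 0 t) = 1.
  have := congr1 determinant (hPg n k).
  rewrite !det_mulmx det_diag (hg n k) mulr1 => /(congr1 nc).
  by rewrite ncM (unit_det (hP n k)) (unit_det (hQ n k)) mulr1.
pose cc k := (\prod_t al n k 0 t) / \det (P m k).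
have hcc k : nc (cc k) = 1 by rewrite /cc ncM Normc.normcV (unit_det (hP m k)) hprodal invr1 mulr1.
pose E k : 'rV[R[i]]_(d k) := \row_t ((if t == t0 k then cc k else 1) / al n k 0 t).
exists (gmul (fun k => diag_mx (E k)) (P m)); split.
  move=> k; rewrite /gmul det_mulmx det_diag.
  under eq_bigr do rewrite mxE.
  rewrite prodf_div [\prod_i (if _ then _ else _)](bigD1 (t0 k)) //= ?eqxx big1 ?mulr1; last by move=> t /negbTE ->.
  have hpa : \prod_t al n k 0 t != 0 by apply/prodf_neq0 => t _; apply: hal.
  have hdk := hdetP k.
  by rewrite /cc; field; rewrite hpa hdk.
rewrite -(act_comp (fun k => diag_mx (E k)) (P m) L) act_diag.
apply: le_lt_trans (vnorm_le_sum _) _.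
have hterm (i : idx d) : nc ((\prod_k E k 0 (i k)) * act (P m) L i) <= 2 * B / r n + eta.
  have -> : \prod_k E k 0 (i k) = (\prod_k (if i k == t0 k then cc k else 1)) / chi i.
    by rewrite /chi -prodf_div; apply: eq_bigr => k _; rewrite mxE.
  rewrite ncM ncM Normc.normcV nc_prod.
  rewrite big1 ?mul1r; last by move=> k _; case: eqP => _; rewrite ?hcc ?Normc.normc1.
  have hci := nc_gt0 (hchi i).
  rewrite mulrC -/y ler_pdivrMr //.
  have hmc := hmuchi i.
  have hy := hym i.
  have hemu : eta * mu <= eta * nc (chi i) by rewrite ler_wpM2l // ltW.
  have hyu := ncD (y i - u i) (u i); rewrite subrK in hyu.
  have h2B : 0 <= 2 * B / r n by rewrite divr_ge0 ?mulr_ge0 // ltW.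
  have h2Bc : 0 <= 2 * B / r n * nc (chi i) by rewrite mulr_ge0 // ltW.
  case: (eqVneq (u i) 0) => [hu0|hu].
    rewrite hu0 subr0 Normc.normc0 addr0 in hyu; rewrite hu0 subr0 in hy.
    rewrite mulrDl; move: hyu hy hemu h2Bc; set X := eta * nc (chi i); lra.
  have hk := key i hu.
  rewrite mulrDl; move: hyu hy hemu hk; set X := eta * nc (chi i); set Z := 2 * B / r n * nc (chi i); lra.
have hfin : 2 * B / r n + eta <= e / (2 * D).
  have h8 : 8 * B * D < e * r n.
    by move: hr; rewrite ltr_pdivrMr // [e * _]mulrC.
  have : 2 * B / r n <= e / (4 * D).
    rewrite ler_pdivrMr // mulrAC ler_pdivlMr ?mulr_gt0 //.
    have -> : 2 * B * (4 * D) = 8 * B * D by ring.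
    exact: ltW.
  rewrite /eta; move=> h.
  have -> : e / (2 * D) = e / (4 * D) + e / (4 * D).
    by field; rewrite lt0r_neq0.
  lra.
apply: le_lt_trans (_ : _ <= \sum_(i : idx d) (e / (2 * D))) _.
  by apply: ler_sum => i _; apply: le_trans (hterm i) hfin.
rewrite sumr_const -[_ *+ _]mulr_natl.
have -> : #|{: idx d}|%:R * (e / (2 * D)) = e / 2 by rewrite -/D; field; rewrite lt0r_neq0.
lra.
Qed.
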